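(* Let $\mathcal V$ be a subvariety of the variety of pseudo-Kleene lattices. Then every member of $\mathcal V$ is super-paraorthomodular if and only if $\mathcal V$ contains no member isomorphic to $\mathbf B_6$, to $\mathbf B_8^*$, or to $\mathbf B_{10}$.
   Context: A pseudo-Kleene lattice is an algebra $(A,\land,\lor,{}',0,1)$ that is a bounded lattice with an antitone involution ${}'$ ($x\leq y\Rightarrow y'\leq x'$, $x''=x$) satisfying $x\land x'\leq y\lor y'$. It is super-paraorthomodular if for all $x,y$: (SP1) $x\leq y$ and $x'\land y=(x\land x')\lor(y\land y')$ imply $y\land(x\lor x')=x\lor(y\land y')$; (SP2) $x\leq y$ implies $(x\land x')\lor(y\land y')=(x'\land y)\land(x'\land y)'$. In the following finite pseudo-Kleene lattices the involution maps $u\leftrightarrow u'$, $0\leftrightarrow 1$. $\mathbf B_6$: elements $0,x,y,y',x',1$, covers $0\prec x\prec y\prec 1$, $0\prec y'\prec x'\prec 1$. $\mathbf B_8^*$: elements $0,x,y,z,z',y',x',1$, covers $0\prec x$, $0\prec y$, $x\prec z$, $y\prec z'$, $z\prec z'$, $z\prec y'$, $z'\prec x'$, $y'\prec 1$, $x'\prec 1$. $\mathbf B_{10}$: elements $0,x,y',m,a,a',x',y,m',1$, covers $0\prec y'$, $0\prec m$, $0\prec x$, $y'\prec a'$, $m\prec a'$, $m\prec a$, $x\prec a$, $a'\prec x'$, $a'\prec m'$, $a\prec m'$, $a\prec y$, $x'\prec 1$, $m'\prec 1$, $y\prec 1$. *)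

(* Defs.v *)
From mathcomp Require Import all_boot.
Set Implicit Arguments. Unset Strict Implicit. Unset Printing Implicit Defensive.

Record Alg := MkAlg {
  car :> Type;
  mt : car -> car -> car;
  jn : car -> car -> car;
  ng : car -> car;
  zr : car;
  on : car }.

Definition ale (A : Alg) (x y : A) : Prop := mt x y = x.

Definition is_PKL (A : Alg) : Prop :=
  (forall x y : A, mt x y = mt y x) /\
  (forall x y : A, jn x y = jn y x) /\
  (forall x y z : A, mt x (mt y z) = mt (mt x y) z) /\
  (forall x y z : A, jn x (jn y z) = jn (jn x y) z) /\
  (forall x y : A, mt x (jn x y) = x) /\
  (forall x y : A, jn x (mt x y) = x) /\
  (forall x : A, mt x (on A) = x) /\
  (forall x : A, jn x (zr A) = x) /\
  (forall x : A, ng (ng x) = x) /\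
  (forall x y : A, ale x y -> ale (ng y) (ng x)) /\
  (forall x y : A, ale (mt x (ng x)) (jn y (ng y))).

Definition is_SPOML (A : Alg) : Prop :=
  (forall x y : A, ale x y ->
     mt (ng x) y = jn (mt x (ng x)) (mt y (ng y)) ->
     mt y (jn x (ng x)) = jn x (mt y (ng y))) /\
  (forall x y : A, ale x y ->
     jn (mt x (ng x)) (mt y (ng y)) = mt (mt (ng x) y) (ng (mt (ng x) y))).

Inductive term : Type :=
| TVar : nat -> term
| TMeet : term -> term -> term
| TJoin : term -> term -> term
| TNeg : term -> term
| TZero : term
| TOne : term.

Fixpoint teval (A : Alg) (v : nat -> A) (t : term) : A :=
  match t with
  | TVar i => v i
  | TMeet p q => mt (teval v p) (teval v q)
  | TJoin p q => jn (teval v p) (teval v q)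
  | TNeg p => ng (teval v p)
  | TZero => zr A
  | TOne => on A
  end.

Definition satisfies (A : Alg) (e : term * term) : Prop :=
  forall v : nat -> A, teval v e.1 = teval v e.2.

(* The subvariety of pseudo-Kleene lattices axiomatized (relative to the
   PKL axioms) by the set of identities E.  Every subvariety of PKL is of
   this form (Birkhoff), and every such class is a subvariety. *)
Definition in_subvariety (E : term * term -> Prop) (A : Alg) : Prop :=
  is_PKL A /\ forall e, E e -> satisfies A e.

Definition alg_iso (A B : Alg) : Prop :=
  exists (f : A -> B) (g : B -> A),
    cancel f g /\ cancel g f /\
    (forall x y, f (mt x y) = mt (f x) (f y)) /\
    (forall x y, f (jn x y) = jn (f x) (f y)) /\
    (forall x, f (ng x) = ng (f x)) /\
    f (zr A) = zr B /\ f (on A) = on B.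

(* Finite lattices given by their Hasse diagram.
   All of this is computable (closed terms reduce by vm_compute). *)
Section FinAlg.
Variables (T : Type) (enum : seq T) (code : T -> nat) (cov : seq (nat * nat)).
Variables (neg : T -> T) (bot top : T).

Definition step (S : seq nat) : seq nat :=
  undup (S ++ [seq c.2 | c <- cov & c.1 \in S]).
Definition fle (x y : T) : bool :=
  code y \in iter (size enum) step [:: code x].
Definition is_glb (x y z : T) : bool :=
  [&& fle z x, fle z y & all (fun w => (fle w x && fle w y) ==> fle w z) enum].
Definition is_lub (x y z : T) : bool :=
  [&& fle x z, fle y z & all (fun w => (fle x w && fle y w) ==> fle z w) enum].
Definition fmeet (x y : T) : T := head x (filter (is_glb x y) enum).
Definition fjoin (x y : T) : T := head x (filter (is_lub x y) enum).
Definition fin_alg : Alg := @MkAlg T fmeet fjoin neg bot top.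
End FinAlg.

(* B6: elements 0,x,y,y',x',1; covers 0<x<y<1, 0<y'<x'<1 *)
Inductive E6 := b6_0 | b6_x | b6_y | b6_y' | b6_x' | b6_1.
Definition code6 (e : E6) : nat :=
  match e with b6_0 => 0 | b6_x => 1 | b6_y => 2 | b6_y' => 3 | b6_x' => 4 | b6_1 => 5 end.
Definition neg6 (e : E6) : E6 :=
  match e with b6_0 => b6_1 | b6_x => b6_x' | b6_y => b6_y' | b6_y' => b6_y
  | b6_x' => b6_x | b6_1 => b6_0 end.
Definition B6 : Alg :=
  fin_alg [:: b6_0; b6_x; b6_y; b6_y'; b6_x'; b6_1] code6
    [:: (0,1); (1,2); (2,5); (0,3); (3,4); (4,5)] neg6 b6_0 b6_1.

(* B8*: elements 0,x,y,z,z',y',x',1; covers 0<x, 0<y, x<z, y<z', z<z',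
   z<y', z'<x', y'<1, x'<1 *)
Inductive E8 := b8_0 | b8_x | b8_y | b8_z | b8_z' | b8_y' | b8_x' | b8_1.
Definition code8 (e : E8) : nat :=
  match e with b8_0 => 0 | b8_x => 1 | b8_y => 2 | b8_z => 3 | b8_z' => 4
  | b8_y' => 5 | b8_x' => 6 | b8_1 => 7 end.
Definition neg8 (e : E8) : E8 :=
  match e with b8_0 => b8_1 | b8_x => b8_x' | b8_y => b8_y' | b8_z => b8_z'
  | b8_z' => b8_z | b8_y' => b8_y | b8_x' => b8_x | b8_1 => b8_0 end.
Definition B8s : Alg :=
  fin_alg [:: b8_0; b8_x; b8_y; b8_z; b8_z'; b8_y'; b8_x'; b8_1] code8
    [:: (0,1); (0,2); (1,3); (2,4); (3,4); (3,5); (4,6); (5,7); (6,7)]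
    neg8 b8_0 b8_1.

(* B10: elements 0,x,y',m,a,a',x',y,m',1; covers 0<y', 0<m, 0<x, y'<a',
   m<a', m<a, x<a, a'<x', a'<m', a<m', a<y, x'<1, m'<1, y<1 *)
Inductive E10 := b10_0 | b10_x | b10_y' | b10_m | b10_a | b10_a' | b10_x'
  | b10_y | b10_m' | b10_1.
Definition code10 (e : E10) : nat :=
  match e with b10_0 => 0 | b10_x => 1 | b10_y' => 2 | b10_m => 3 | b10_a => 4
  | b10_a' => 5 | b10_x' => 6 | b10_y => 7 | b10_m' => 8 | b10_1 => 9 end.
Definition neg10 (e : E10) : E10 :=
  match e with b10_0 => b10_1 | b10_x => b10_x' | b10_y' => b10_y
  | b10_m => b10_m' | b10_a => b10_a' | b10_a' => b10_a | b10_x' => b10_x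
  | b10_y => b10_y' | b10_m' => b10_m | b10_1 => b10_0 end.
Definition B10 : Alg :=
  fin_alg [:: b10_0; b10_x; b10_y'; b10_m; b10_a; b10_a'; b10_x'; b10_y;
              b10_m'; b10_1] code10
    [:: (0,2); (0,3); (0,1); (2,5); (3,5); (3,4); (1,4); (5,6); (5,8);
        (4,8); (4,7); (6,9); (8,9); (7,9)] neg10 b10_0 b10_1.

(* Main.v *)
Require Import Defs.
From mathcomp Require Import all_boot.
From Stdlib Require List.
From Stdlib Require Import Classical.
Set Implicit Arguments. Unset Strict Implicit. Unset Printing Implicit Defensive.

Section Lat.
Variable A : Alg.
Hypothesis HA : is_PKL A.

Lemma mC (x y : A) : mt x y = mt y x. Proof. by case: HA. Qed.
Lemma jC (x y : A) : jn x y = jn y x. Proof. by case: HA => _ []. Qed.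
Lemma mA (x y z : A) : mt x (mt y z) = mt (mt x y) z. Proof. by case: HA => _ [] _ []. Qed.
Lemma jA (x y z : A) : jn x (jn y z) = jn (jn x y) z. Proof. by case: HA => _ [] _ [] _ []. Qed.
Lemma mJ (x y : A) : mt x (jn x y) = x. Proof. by case: HA => _ [] _ [] _ [] _ []. Qed.
Lemma jM (x y : A) : jn x (mt x y) = x. Proof. by case: HA => _ [] _ [] _ [] _ [] _ []. Qed.
Lemma m1 (x : A) : mt x (on A) = x. Proof. by case: HA => _ [] _ [] _ [] _ [] _ [] _ []. Qed.
Lemma j0 (x : A) : jn x (zr A) = x. Proof. by case: HA => _ [] _ [] _ [] _ [] _ [] _ [] _ []. Qed.
Lemma nK (x : A) : ng (ng x) = x. Proof. by case: HA => _ [] _ [] _ [] _ [] _ [] _ [] _ [] _ []. Qed.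
Lemma nanti (x y : A) : ale x y -> ale (ng y) (ng x).
Proof. by case: HA => _ [] _ [] _ [] _ [] _ [] _ [] _ [] _ [] _ [] H _; apply: H. Qed.
Lemma kl (x y : A) : ale (mt x (ng x)) (jn y (ng y)).
Proof. by case: HA => _ [] _ [] _ [] _ [] _ [] _ [] _ [] _ [] _ [] _ H; apply: H. Qed.

Lemma mm (x : A) : mt x x = x. Proof. by have := mJ x (mt x x); rewrite jM. Qed.
Lemma jj (x : A) : jn x x = x. Proof. by have := jM x (jn x x); rewrite mJ. Qed.
Lemma le_refl (x : A) : ale x x. Proof. exact: mm. Qed.
Lemma le_trans (x y z : A) : ale x y -> ale y z -> ale x z.
Proof. rewrite /ale => Hxy Hyz. by rewrite -Hxy -mA Hyz. Qed.
Lemma le_anti (x y : A) : ale x y -> ale y x -> x = y.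
Proof. rewrite /ale => H1 H2. by rewrite -H1 mC H2. Qed.
Lemma aleJ (x y : A) : ale x y <-> jn x y = y.
Proof.
split => H.
- by rewrite -H jC mC jM.
- by rewrite /ale -H mJ.
Qed.
Lemma le_ml (x y : A) : ale (mt x y) x.
Proof. by rewrite /ale mC mA mm. Qed.
Lemma le_mr (x y : A) : ale (mt x y) y.
Proof. by rewrite /ale -mA mm. Qed.
Lemma le_glb (x y z : A) : ale z x -> ale z y -> ale z (mt x y).
Proof. rewrite /ale => H1 H2. by rewrite mA H1 H2. Qed.
Lemma le_jl (x y : A) : ale x (jn x y). Proof. exact: mJ. Qed.
Lemma le_jr (x y : A) : ale y (jn x y). Proof. rewrite jC. exact: mJ. Qed.
Lemma le_lub (x y z : A) : ale x z -> ale y z -> ale (jn x y) z.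
Proof. move=> /aleJ H1 /aleJ H2. apply/aleJ. by rewrite -jA H2 H1. Qed.
Lemma le_bot (x : A) : ale (zr A) x. Proof. apply/aleJ. by rewrite jC j0. Qed.
Lemma le_top (x : A) : ale x (on A). Proof. exact: m1. Qed.
Lemma ng_le (x y : A) : ale x (ng y) -> ale y (ng x).
Proof. move=> H. have := nanti H. by rewrite nK. Qed.
Lemma ng_le2 (x y : A) : ale (ng x) y -> ale (ng y) x.
Proof. move=> H. have := nanti H. by rewrite nK. Qed.
Lemma ngJ (x y : A) : ng (jn x y) = mt (ng x) (ng y).
Proof.
apply: le_anti.
- apply: le_glb; apply: nanti; [exact: le_jl | exact: le_jr].
- apply: ng_le. apply: le_lub; apply: ng_le; [exact: le_ml | exact: le_mr].
Qed.
Lemma ngM (x y : A) : ng (mt x y) = jn (ng x) (ng y).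
Proof. by rewrite -{1}(nK x) -{1}(nK y) -ngJ nK. Qed.
Lemma ng0 : ng (zr A) = on A.
Proof. apply: le_anti; first exact: le_top. apply: ng_le. exact: le_bot. Qed.
Lemma ng1 : ng (on A) = zr A.
Proof. by rewrite -ng0 nK. Qed.
Lemma kle (s t : A) : ale s (ng s) -> ale (ng t) t -> ale s t.
Proof.
move=> H1 /aleJ H2. have := kl s t. by rewrite H1 jC H2.
Qed.
Lemma le_mlt (x y z : A) : ale x z -> ale (mt x y) z.
Proof. move=> H; exact: le_trans (le_ml _ _) H. Qed.
Lemma le_mrt (x y z : A) : ale y z -> ale (mt x y) z.
Proof. move=> H; exact: le_trans (le_mr _ _) H. Qed.
Lemma le_jlt (x y z : A) : ale x y -> ale x (jn y z).
Proof. move=> H; exact: le_trans H (le_jl _ _). Qed.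
Lemma le_jrt (x y z : A) : ale x z -> ale x (jn y z).
Proof. move=> H; exact: le_trans H (le_jr _ _). Qed.
End Lat.

Inductive tm := TV of nat | TNV of nat | T0 | T1 | TM of tm & tm | TJ of tm & tm.

Fixpoint tneg (s : tm) : tm :=
  match s with
  | TV i => TNV i | TNV i => TV i | T0 => T1 | T1 => T0
  | TM a b => TJ (tneg a) (tneg b) | TJ a b => TM (tneg a) (tneg b) end.

Fixpoint tm_eqb (s t : tm) : bool :=
  match s, t with
  | TV i, TV j => Nat.eqb i j
  | TNV i, TNV j => Nat.eqb i j
  | T0, T0 => true | T1, T1 => true
  | TM a b, TM c d => if tm_eqb a c then tm_eqb b d else false
  | TJ a b, TJ c d => if tm_eqb a c then tm_eqb b d else false
  | _, _ => false end.

Lemma tm_eqbP s t : tm_eqb s t = true -> s = t.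
Proof.
elim: s t => [i|i|||a IHa b IHb|a IHa b IHb] [j|j|||c d|c d] //=;
  try (by move/PeanoNat.Nat.eqb_eq => ->);
  by case E: (tm_eqb a c) => // /IHb ->; rewrite (IHa _ E).
Qed.

Lemma tnegK s : tneg (tneg s) = s.
Proof. by elim: s => //= a -> b ->. Qed.

Fixpoint anyh (r : tm -> tm -> bool) (s t : tm) (l : seq (tm * tm)) : bool :=
  match l with
  | [::] => false
  | h :: l' => if (if r s h.1 then r h.2 t else false) then true else anyh r s t l'
  end.

Fixpoint chk (hs : seq (tm * tm)) (d f : nat) (s t : tm) {struct f} : bool :=
  match f with
  | 0 => false
  | f'.+1 =>
    if tm_eqb s t then true else
    match s, t with
    | T0, _ => true
    | _, T1 => true
    | TJ s1 s2, _ => if chk hs d f' s1 t then chk hs d f' s2 t else false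
    | _, TM t1 t2 => if chk hs d f' s t1 then chk hs d f' s t2 else false
    | _, _ =>
      if (match s with TM s1 s2 => if chk hs d f' s1 t then true else chk hs d f' s2 t | _ => false end)
      then true else
      if (match t with TJ t1 t2 => if chk hs d f' s t1 then true else chk hs d f' s t2 | _ => false end)
      then true else
      match d with
      | 0 => false
      | d'.+1 =>
        if (if chk hs d' f' s (tneg s) then chk hs d' f' (tneg t) t else false) then true
        else anyh (chk hs d' f') s t hs
      end
    end
  end.

Section Sound.
Variable A : Alg.
Hypothesis HA : is_PKL A.
Variable rho : nat -> A.

Fixpoint ev (s : tm) : A :=
  match s with
  | TV i => rho i | TNV i => ng (rho i) | T0 => zr A | T1 => on A
  | TM a b => mt (ev a) (ev b) | TJ a b => jn (ev a) (ev b) end.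

Lemma ev_neg s : ev (tneg s) = ng (ev s).
Proof.
elim: s => [i|i|||a IHa b IHb|a IHa b IHb] /=.
- by []. - by rewrite nK. - by rewrite ng0. - by rewrite ng1.
- by rewrite IHa IHb ngM. - by rewrite IHa IHb ngJ.
Qed.

Variable hs : seq (tm * tm).
Hypothesis Hhs : forall h, List.In h hs -> ale (ev h.1) (ev h.2).

Lemma anyh_sound (r : tm -> tm -> bool) s t :
  (forall u v, r u v = true -> ale (ev u) (ev v)) ->
  forall l, (forall h, List.In h l -> List.In h hs) -> anyh r s t l = true -> ale (ev s) (ev t).
Proof.
move=> Hr; elim=> [//|h l IH] Hl /=.
case E1: (r s h.1); case E2: (r h.2 t) => //= H.
- exact: (le_trans HA (Hr _ _ E1) (le_trans HA (Hhs (Hl h (or_introl erefl))) (Hr _ _ E2))).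
- apply: IH => // h' Hh'; apply: Hl; by right.
- apply: IH => // h' Hh'; apply: Hl; by right.
- apply: IH => // h' Hh'; apply: Hl; by right.
Qed.

Lemma chk_sound f : forall d s t, chk hs d f s t = true -> ale (ev s) (ev t).
Proof.
elim: f => [//|f IH] d s t /=.
case Eq: (tm_eqb s t); first by move=> _; rewrite (tm_eqbP Eq); exact: le_refl.
have deep : (match d with
      | 0 => false
      | d'.+1 =>
        if (if chk hs d' f s (tneg s) then chk hs d' f (tneg t) t else false) then true
        else anyh (chk hs d' f) s t hs
      end) = true -> ale (ev s) (ev t).
  case: d => [//|d].
  case E1: (chk hs d f s (tneg s)); case E2: (chk hs d f (tneg t) t) => /= H.
  + apply: (kle HA); first by rewrite -ev_neg; exact: IH E1.
    rewrite -ev_neg. exact: IH E2.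
  + by apply: anyh_sound H => //; exact: IH.
  + by apply: anyh_sound H => //; exact: IH.
  + by apply: anyh_sound H => //; exact: IH.
have wl : forall s1 s2, (if chk hs d f s1 t then true else chk hs d f s2 t) = true ->
    ale (mt (ev s1) (ev s2)) (ev t).
  move=> s1 s2; case E: (chk hs d f s1 t) => H.
  - apply: (le_mlt HA). exact: IH E.
  - apply: (le_mrt HA). exact: IH H.
have wr : forall t1 t2, (if chk hs d f s t1 then true else chk hs d f s t2) = true ->
    ale (ev s) (jn (ev t1) (ev t2)).
  move=> t1 t2; case E: (chk hs d f s t1) => H.
  - apply: (le_jlt HA). exact: IH E.
  - apply: (le_jrt HA). exact: IH H.
have js : forall s1 s2, (if chk hs d f s1 t then chk hs d f s2 t else false) = true ->
    ale (jn (ev s1) (ev s2)) (ev t).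
  move=> s1 s2; case E: (chk hs d f s1 t) => // H.
  apply: (le_lub HA); [exact: IH E | exact: IH H].
have mt' : forall t1 t2, (if chk hs d f s t1 then chk hs d f s t2 else false) = true ->
    ale (ev s) (mt (ev t1) (ev t2)).
  move=> t1 t2; case E: (chk hs d f s t1) => // H.
  apply: (le_glb HA); [exact: IH E | exact: IH H].
case: s Eq deep wl wr js mt' => [i|i||| s1 s2| s1 s2] Eq deep wl wr js mt';
case: t Eq deep wl wr js mt' => [j|j||| t1 t2| t1 t2] Eq deep wl wr js mt' //=;
  try (by move=> _; apply: (le_bot HA));
  try (by move=> _; apply: (le_top HA));
  try (by move/js);
  try (by move/mt');
  try (case E1: (if _ then true else _) => H; [by apply: wl E1 | ]);
  try (case E2: (if _ then true else _) in H *; [by apply: wr E2 | by apply: deep]);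
  try (case E2: (if _ then true else _) => H; [by apply: wr E2 | by apply: deep]);
  try (by apply: deep).
all: move=> H.
all: first [ case E1: (if chk hs d f s1 _ then true else chk hs d f s2 _) in H;
             [by apply: wl E1 | ] | idtac ].
all: first [ case E2: (if chk hs d f _ t1 then true else chk hs d f _ t2) in H;
             [by apply: wr E2 | ] | idtac ].
all: by apply: deep.
Qed.
End Sound.

Inductive op (T : Type) := OSw | ONg | OMt of T | OJn of T.
Arguments OSw {T}. Arguments ONg {T}.

Section Construct.
Variables (A : Alg) (B : Alg).
Hypothesis HA : is_PKL A.
Hypothesis HB : is_PKL B.
Variable lam : B -> A.
Hypothesis M1 : forall b c, ale (lam (mt b c)) (lam b).
Hypothesis J1 : forall b c, ale (lam (jn b c)) (jn (lam b) (lam c)).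
Hypothesis H1 : forall b, ale (lam b) (ng (lam (ng b))).
Hypothesis Z : ale (lam (zr B)) (zr A).

Definition inI (b : B) (u : A) := ale (lam b) u /\ ale u (ng (lam (ng b))).

Lemma M1' b c : ale (lam (mt b c)) (lam c).
Proof. rewrite mC //; exact: M1. Qed.

Lemma inI_mt b c u v : inI b u -> inI c v -> inI (mt b c) (mt u v).
Proof.
move=> [h1 h2] [h3 h4]; split.
- apply: (le_glb HA).
  + apply: (le_trans HA) h1. exact: M1.
  + apply: (le_trans HA) h3. exact: M1'.
- rewrite (ngM HB).
  apply: (le_trans HA (y := ng (jn (lam (ng b)) (lam (ng c))))).
  + rewrite (ngJ HA). apply: (le_glb HA); [exact: (le_mlt HA) | exact: (le_mrt HA)].
  + apply: (nanti HA). exact: J1.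
Qed.

Lemma inI_jn b c u v : inI b u -> inI c v -> inI (jn b c) (jn u v).
Proof.
move=> [h1 h2] [h3 h4]; split.
- apply: (le_trans HA (J1 b c)). apply: (le_lub HA); [exact: (le_jlt HA) | exact: (le_jrt HA)].
- rewrite (ngJ HB). apply: (le_lub HA).
  + apply: (le_trans HA h2). apply: (nanti HA). exact: M1.
  + apply: (le_trans HA h4). apply: (nanti HA). exact: M1'.
Qed.

Lemma inI_ng b u : inI b u -> inI (ng b) (ng u).
Proof.
move=> [h1 h2]; split.
- exact: (ng_le HA h2).
- rewrite (nK HB). exact: (nanti HA).
Qed.

Lemma inI_zr : inI (zr B) (zr A).
Proof. split; [exact: Z | exact: (le_bot HA)]. Qed.

Lemma inI_on : inI (on B) (on A).
Proof.
split; first exact: (le_top HA).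
rewrite (ng1 HB). apply: (ng_le HA). rewrite (ng1 HA). exact: Z.
Qed.

Lemma inI_lam b : inI b (lam b).
Proof. split; [exact: (le_refl HA) | exact: H1]. Qed.

Lemma teval_in (v : nat -> B) t : inI (teval v t) (teval (fun i => lam (v i)) t).
Proof.
elim: t => [i|p IHp q IHq|p IHp q IHq|p IHp||] /=.
- exact: inI_lam.
- exact: inI_mt.
- exact: inI_jn.
- exact: inI_ng.
- exact: inI_zr.
- exact: inI_on.
Qed.

Variables (mtt jnt : B -> B -> B).
Hypothesis Hm : forall b c, mt b c = mtt b c.
Hypothesis Hj : forall b c, jn b c = jnt b c.
Definition app_op (o : op B) (pr : B * B) : B * B :=
  match o with
  | OSw => (pr.2, pr.1)
  | ONg => (ng pr.1, ng pr.2)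
  | OMt d => (mtt pr.1 d, mtt pr.2 d)
  | OJn d => (jnt pr.1 d, jnt pr.2 d)
  end.

Definition Rel (pr : B * B) := exists u, inI pr.1 u /\ inI pr.2 u.

Lemma Rel_op o pr : Rel pr -> Rel (app_op o pr).
Proof.
case: pr => b c [u [h1 h2]]; case: o => [||d|d] /=.
- by exists u.
- exists (ng u); split; exact: inI_ng.
- exists (mt u (lam d)); rewrite -!Hm; split; apply: inI_mt => //; exact: inI_lam.
- exists (jn u (lam d)); rewrite -!Hj; split; apply: inI_jn => //; exact: inI_lam.
Qed.

Lemma Rel_ops ops pr : Rel pr -> Rel (foldl (fun p o => app_op o p) pr ops).
Proof. elim: ops pr => [//|o ops IH] pr H /=. apply: IH. exact: Rel_op. Qed.

Variables (en : seq B) (beq : B -> B -> bool).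
Hypothesis Hen : forall b, List.In b en.
Hypothesis beqP : forall b c, beq b c = true <-> b = c.
Variables (b0 c0 : B).
Hypothesis key : ~ ale (lam c0) (ng (lam (ng b0))).
Variable cert : seq (B * B * seq (op B)).

Definition cert_ok : bool :=
  List.forallb (fun b => List.forallb (fun c =>
     if beq b c then true else
     List.existsb (fun x => match x with (b', c', ops) =>
        if beq b b' then (if beq c c' then
          (let pr := foldl (fun p o => app_op o p) (b, c) ops in
           if beq pr.1 b0 then beq pr.2 c0 else false) else false) else false end) cert) en) en.

Hypothesis Hcert : cert_ok = true.

Lemma disj b c u : b <> c -> inI b u -> inI c u -> False.
Proof.
move=> Hbc hb hc.
have := proj1 (List.forallb_forall _ _) Hcert b (Hen b).
move/List.forallb_forall => /(_ c (Hen c)).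
case E: (beq b c); first by move: E => /beqP.
move/List.existsb_exists => [[[b' c'] ops] [_ H]].
move: H; case E1: (beq b b') => //; case E2: (beq c c') => //.
clear E1 E2.
have := Rel_ops ops (ex_intro _ u (conj hb hc) : Rel (b, c)).
case: (foldl _ _ _) => b1 c1 [w [[h1 h2] [h3 h4]]] /=.
case E3: (beq b1 b0) => //; move=> /beqP E4; move: E3 => /beqP E3.
subst b1 c1. apply: key. exact: (le_trans HA h3 h2).
Qed.

Lemma transfer e : satisfies A e -> satisfies B e.
Proof.
move=> HAe v.
have h1 := teval_in v e.1.
have h2 := teval_in v e.2.
rewrite (HAe (fun i => lam (v i))) in h1.
case: (classic (teval v e.1 = teval v e.2)) => // Hne.
exfalso. exact: (disj Hne h1 h2).
Qed.
End Construct.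

Definition en6 : seq E6 := [:: b6_0; b6_x; b6_y; b6_y'; b6_x'; b6_1].
Definition en8 : seq E8 := [:: b8_0; b8_x; b8_y; b8_z; b8_z'; b8_y'; b8_x'; b8_1].
Definition en10 : seq E10 := [:: b10_0; b10_x; b10_y'; b10_m; b10_a; b10_a'; b10_x'; b10_y; b10_m'; b10_1].
Lemma Hen6 b : List.In b en6. Proof. case: b; rewrite /en6 /=; tauto. Qed.
Lemma Hen8 b : List.In b en8. Proof. case: b; rewrite /en8 /=; tauto. Qed.
Lemma Hen10 b : List.In b en10. Proof. case: b; rewrite /en10 /=; tauto. Qed.
Definition beq6 (b c : E6) := Nat.eqb (code6 b) (code6 c).
Definition beq8 (b c : E8) := Nat.eqb (code8 b) (code8 c).
Definition beq10 (b c : E10) := Nat.eqb (code10 b) (code10 c).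
Lemma beq6P b c : beq6 b c = true <-> b = c. Proof. by case: b; case: c. Qed.
Lemma beq8P b c : beq8 b c = true <-> b = c. Proof. by case: b; case: c. Qed.
Lemma beq10P b c : beq10 b c = true <-> b = c. Proof. by case: b; case: c. Qed.
Definition mt_B6 (u v : E6) : E6 :=
  match u, v with
  | b6_0, b6_0 => b6_0
  | b6_0, b6_x => b6_0
  | b6_0, b6_y => b6_0
  | b6_0, b6_y' => b6_0
  | b6_0, b6_x' => b6_0
  | b6_0, b6_1 => b6_0
  | b6_x, b6_0 => b6_0
  | b6_x, b6_x => b6_x
  | b6_x, b6_y => b6_x
  | b6_x, b6_y' => b6_0
  | b6_x, b6_x' => b6_0
  | b6_x, b6_1 => b6_x
  | b6_y, b6_0 => b6_0
  | b6_y, b6_x => b6_x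
  | b6_y, b6_y => b6_y
  | b6_y, b6_y' => b6_0
  | b6_y, b6_x' => b6_0
  | b6_y, b6_1 => b6_y
  | b6_y', b6_0 => b6_0
  | b6_y', b6_x => b6_0
  | b6_y', b6_y => b6_0
  | b6_y', b6_y' => b6_y'
  | b6_y', b6_x' => b6_y'
  | b6_y', b6_1 => b6_y'
  | b6_x', b6_0 => b6_0
  | b6_x', b6_x => b6_0
  | b6_x', b6_y => b6_0
  | b6_x', b6_y' => b6_y'
  | b6_x', b6_x' => b6_x'
  | b6_x', b6_1 => b6_x'
  | b6_1, b6_0 => b6_0
  | b6_1, b6_x => b6_x
  | b6_1, b6_y => b6_y
  | b6_1, b6_y' => b6_y'
  | b6_1, b6_x' => b6_x'
  | b6_1, b6_1 => b6_1
  end.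
Definition jn_B6 (u v : E6) : E6 :=
  match u, v with
  | b6_0, b6_0 => b6_0
  | b6_0, b6_x => b6_x
  | b6_0, b6_y => b6_y
  | b6_0, b6_y' => b6_y'
  | b6_0, b6_x' => b6_x'
  | b6_0, b6_1 => b6_1
  | b6_x, b6_0 => b6_x
  | b6_x, b6_x => b6_x
  | b6_x, b6_y => b6_y
  | b6_x, b6_y' => b6_1
  | b6_x, b6_x' => b6_1
  | b6_x, b6_1 => b6_1
  | b6_y, b6_0 => b6_y
  | b6_y, b6_x => b6_y
  | b6_y, b6_y => b6_y
  | b6_y, b6_y' => b6_1
  | b6_y, b6_x' => b6_1
  | b6_y, b6_1 => b6_1
  | b6_y', b6_0 => b6_y'
  | b6_y', b6_x => b6_1
  | b6_y', b6_y => b6_1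
  | b6_y', b6_y' => b6_y'
  | b6_y', b6_x' => b6_x'
  | b6_y', b6_1 => b6_1
  | b6_x', b6_0 => b6_x'
  | b6_x', b6_x => b6_1
  | b6_x', b6_y => b6_1
  | b6_x', b6_y' => b6_x'
  | b6_x', b6_x' => b6_x'
  | b6_x', b6_1 => b6_1
  | b6_1, b6_0 => b6_1
  | b6_1, b6_x => b6_1
  | b6_1, b6_y => b6_1
  | b6_1, b6_y' => b6_1
  | b6_1, b6_x' => b6_1
  | b6_1, b6_1 => b6_1
  end.
Definition cert_B6 : seq (E6 * E6 * seq (op E6)) := [::
  (b6_0, b6_x, [:: (OJn b6_y'); (OMt b6_y); (OJn b6_x)]);
  (b6_0, b6_y, [:: (OJn b6_x)]);
  (b6_0, b6_y', [:: (OJn b6_x); (OMt b6_y)]);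
  (b6_0, b6_x', [:: (OJn b6_x); (OMt b6_y)]);
  (b6_0, b6_1, [:: (OJn b6_x); (OMt b6_y)]);
  (b6_x, b6_0, [:: ONg; (OMt b6_y); (OJn b6_x)]);
  (b6_x, b6_y, [:: ]);
  (b6_x, b6_y', [:: (OJn b6_x); (OMt b6_y)]);
  (b6_x, b6_x', [:: (OJn b6_x); (OMt b6_y)]);
  (b6_x, b6_1, [:: (OMt b6_y)]);
  (b6_y, b6_0, [:: OSw; (OJn b6_x)]);
  (b6_y, b6_x, [:: OSw]);
  (b6_y, b6_y', [:: OSw; (OMt b6_y); (OJn b6_x)]);
  (b6_y, b6_x', [:: OSw; (OMt b6_y); (OJn b6_x)]);
  (b6_y, b6_1, [:: (OMt b6_y'); (OJn b6_x); (OMt b6_y)]);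
  (b6_y', b6_0, [:: OSw; (OJn b6_x); (OMt b6_y)]);
  (b6_y', b6_x, [:: OSw; (OJn b6_x); (OMt b6_y)]);
  (b6_y', b6_y, [:: (OMt b6_y); (OJn b6_x)]);
  (b6_y', b6_x', [:: OSw; ONg]);
  (b6_y', b6_1, [:: (OMt b6_y); (OJn b6_x)]);
  (b6_x', b6_0, [:: ONg; (OMt b6_y)]);
  (b6_x', b6_x, [:: OSw; (OJn b6_x); (OMt b6_y)]);
  (b6_x', b6_y, [:: (OMt b6_y); (OJn b6_x)]);
  (b6_x', b6_y', [:: ONg]);
  (b6_x', b6_1, [:: (OMt b6_y); (OJn b6_x)]);
  (b6_1, b6_0, [:: OSw; (OJn b6_x); (OMt b6_y)]);
  (b6_1, b6_x, [:: OSw; (OMt b6_y)]);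
  (b6_1, b6_y, [:: ONg; (OJn b6_x); (OMt b6_y)]);
  (b6_1, b6_y', [:: ONg; (OJn b6_x)]);
  (b6_1, b6_x', [:: OSw; (OMt b6_y); (OJn b6_x)])].

Definition mt_B8 (u v : E8) : E8 :=
  match u, v with
  | b8_0, b8_0 => b8_0
  | b8_0, b8_x => b8_0
  | b8_0, b8_y => b8_0
  | b8_0, b8_z => b8_0
  | b8_0, b8_z' => b8_0
  | b8_0, b8_y' => b8_0
  | b8_0, b8_x' => b8_0
  | b8_0, b8_1 => b8_0
  | b8_x, b8_0 => b8_0
  | b8_x, b8_x => b8_x
  | b8_x, b8_y => b8_0
  | b8_x, b8_z => b8_x
  | b8_x, b8_z' => b8_x
  | b8_x, b8_y' => b8_x
  | b8_x, b8_x' => b8_x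
  | b8_x, b8_1 => b8_x
  | b8_y, b8_0 => b8_0
  | b8_y, b8_x => b8_0
  | b8_y, b8_y => b8_y
  | b8_y, b8_z => b8_0
  | b8_y, b8_z' => b8_y
  | b8_y, b8_y' => b8_0
  | b8_y, b8_x' => b8_y
  | b8_y, b8_1 => b8_y
  | b8_z, b8_0 => b8_0
  | b8_z, b8_x => b8_x
  | b8_z, b8_y => b8_0
  | b8_z, b8_z => b8_z
  | b8_z, b8_z' => b8_z
  | b8_z, b8_y' => b8_z
  | b8_z, b8_x' => b8_z
  | b8_z, b8_1 => b8_z
  | b8_z', b8_0 => b8_0
  | b8_z', b8_x => b8_x
  | b8_z', b8_y => b8_y
  | b8_z', b8_z => b8_z
  | b8_z', b8_z' => b8_z'
  | b8_z', b8_y' => b8_z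
  | b8_z', b8_x' => b8_z'
  | b8_z', b8_1 => b8_z'
  | b8_y', b8_0 => b8_0
  | b8_y', b8_x => b8_x
  | b8_y', b8_y => b8_0
  | b8_y', b8_z => b8_z
  | b8_y', b8_z' => b8_z
  | b8_y', b8_y' => b8_y'
  | b8_y', b8_x' => b8_z
  | b8_y', b8_1 => b8_y'
  | b8_x', b8_0 => b8_0
  | b8_x', b8_x => b8_x
  | b8_x', b8_y => b8_y
  | b8_x', b8_z => b8_z
  | b8_x', b8_z' => b8_z'
  | b8_x', b8_y' => b8_z
  | b8_x', b8_x' => b8_x'
  | b8_x', b8_1 => b8_x'
  | b8_1, b8_0 => b8_0
  | b8_1, b8_x => b8_x
  | b8_1, b8_y => b8_y
  | b8_1, b8_z => b8_z
  | b8_1, b8_z' => b8_z'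
  | b8_1, b8_y' => b8_y'
  | b8_1, b8_x' => b8_x'
  | b8_1, b8_1 => b8_1
  end.
Definition jn_B8 (u v : E8) : E8 :=
  match u, v with
  | b8_0, b8_0 => b8_0
  | b8_0, b8_x => b8_x
  | b8_0, b8_y => b8_y
  | b8_0, b8_z => b8_z
  | b8_0, b8_z' => b8_z'
  | b8_0, b8_y' => b8_y'
  | b8_0, b8_x' => b8_x'
  | b8_0, b8_1 => b8_1
  | b8_x, b8_0 => b8_x
  | b8_x, b8_x => b8_x
  | b8_x, b8_y => b8_z'
  | b8_x, b8_z => b8_z
  | b8_x, b8_z' => b8_z'
  | b8_x, b8_y' => b8_y'
  | b8_x, b8_x' => b8_x'
  | b8_x, b8_1 => b8_1
  | b8_y, b8_0 => b8_y
  | b8_y, b8_x => b8_z'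
  | b8_y, b8_y => b8_y
  | b8_y, b8_z => b8_z'
  | b8_y, b8_z' => b8_z'
  | b8_y, b8_y' => b8_1
  | b8_y, b8_x' => b8_x'
  | b8_y, b8_1 => b8_1
  | b8_z, b8_0 => b8_z
  | b8_z, b8_x => b8_z
  | b8_z, b8_y => b8_z'
  | b8_z, b8_z => b8_z
  | b8_z, b8_z' => b8_z'
  | b8_z, b8_y' => b8_y'
  | b8_z, b8_x' => b8_x'
  | b8_z, b8_1 => b8_1
  | b8_z', b8_0 => b8_z'
  | b8_z', b8_x => b8_z'
  | b8_z', b8_y => b8_z'
  | b8_z', b8_z => b8_z'
  | b8_z', b8_z' => b8_z'
  | b8_z', b8_y' => b8_1
  | b8_z', b8_x' => b8_x'
  | b8_z', b8_1 => b8_1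
  | b8_y', b8_0 => b8_y'
  | b8_y', b8_x => b8_y'
  | b8_y', b8_y => b8_1
  | b8_y', b8_z => b8_y'
  | b8_y', b8_z' => b8_1
  | b8_y', b8_y' => b8_y'
  | b8_y', b8_x' => b8_1
  | b8_y', b8_1 => b8_1
  | b8_x', b8_0 => b8_x'
  | b8_x', b8_x => b8_x'
  | b8_x', b8_y => b8_x'
  | b8_x', b8_z => b8_x'
  | b8_x', b8_z' => b8_x'
  | b8_x', b8_y' => b8_1
  | b8_x', b8_x' => b8_x'
  | b8_x', b8_1 => b8_1
  | b8_1, b8_0 => b8_1
  | b8_1, b8_x => b8_1
  | b8_1, b8_y => b8_1
  | b8_1, b8_z => b8_1
  | b8_1, b8_z' => b8_1
  | b8_1, b8_y' => b8_1
  | b8_1, b8_x' => b8_1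
  | b8_1, b8_1 => b8_1
  end.
Definition cert_B8 : seq (E8 * E8 * seq (op E8)) := [::
  (b8_0, b8_x, [:: (OJn b8_y); (OMt b8_z); (OJn b8_x)]);
  (b8_0, b8_y, [:: (OJn b8_x); (OMt b8_z)]);
  (b8_0, b8_z, [:: (OJn b8_x)]);
  (b8_0, b8_z', [:: (OJn b8_x); (OMt b8_z)]);
  (b8_0, b8_y', [:: (OJn b8_x); (OMt b8_z)]);
  (b8_0, b8_x', [:: (OJn b8_x); (OMt b8_z)]);
  (b8_0, b8_1, [:: (OJn b8_x); (OMt b8_z)]);
  (b8_x, b8_0, [:: OSw; (OJn b8_y); (OMt b8_z); (OJn b8_x)]);
  (b8_x, b8_y, [:: (OJn b8_x); (OMt b8_z)]);
  (b8_x, b8_z, [:: ]);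
  (b8_x, b8_z', [:: (OMt b8_z)]);
  (b8_x, b8_y', [:: (OMt b8_z)]);
  (b8_x, b8_x', [:: (OMt b8_z)]);
  (b8_x, b8_1, [:: (OMt b8_z)]);
  (b8_y, b8_0, [:: OSw; (OJn b8_x); (OMt b8_z)]);
  (b8_y, b8_x, [:: OSw; (OJn b8_x); (OMt b8_z)]);
  (b8_y, b8_z, [:: (OMt b8_z); (OJn b8_x)]);
  (b8_y, b8_z', [:: (OMt b8_z); (OJn b8_x)]);
  (b8_y, b8_y', [:: (OMt b8_z); (OJn b8_x)]);
  (b8_y, b8_x', [:: (OMt b8_z); (OJn b8_x)]);
  (b8_y, b8_1, [:: (OMt b8_z); (OJn b8_x)]);
  (b8_z, b8_0, [:: OSw; (OJn b8_x)]);
  (b8_z, b8_x, [:: OSw]);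
  (b8_z, b8_y, [:: OSw; (OMt b8_z); (OJn b8_x)]);
  (b8_z, b8_z', [:: (OMt b8_y); (OJn b8_x); (OMt b8_z)]);
  (b8_z, b8_y', [:: OSw; ONg; (OMt b8_z); (OJn b8_x)]);
  (b8_z, b8_x', [:: OSw; ONg; (OMt b8_z)]);
  (b8_z, b8_1, [:: (OMt b8_y); (OJn b8_x); (OMt b8_z)]);
  (b8_z', b8_0, [:: OSw; (OJn b8_x); (OMt b8_z)]);
  (b8_z', b8_x, [:: OSw; (OMt b8_z)]);
  (b8_z', b8_y, [:: OSw; (OMt b8_z); (OJn b8_x)]);
  (b8_z', b8_z, [:: OSw; (OMt b8_y); (OJn b8_x); (OMt b8_z)]);
  (b8_z', b8_y', [:: OSw; ONg; (OMt b8_z); (OJn b8_x)]);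
  (b8_z', b8_x', [:: OSw; ONg]);
  (b8_z', b8_1, [:: OSw; ONg; (OJn b8_x)]);
  (b8_y', b8_0, [:: OSw; (OJn b8_x); (OMt b8_z)]);
  (b8_y', b8_x, [:: OSw; (OMt b8_z)]);
  (b8_y', b8_y, [:: OSw; (OMt b8_z); (OJn b8_x)]);
  (b8_y', b8_z, [:: ONg; (OMt b8_z); (OJn b8_x)]);
  (b8_y', b8_z', [:: ONg; (OMt b8_z); (OJn b8_x)]);
  (b8_y', b8_x', [:: (OMt b8_y); (OJn b8_x); (OMt b8_z)]);
  (b8_y', b8_1, [:: (OMt b8_y); (OJn b8_x); (OMt b8_z)]);
  (b8_x', b8_0, [:: ONg; (OMt b8_z)]);
  (b8_x', b8_x, [:: OSw; (OMt b8_z)]);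
  (b8_x', b8_y, [:: ONg; (OMt b8_z)]);
  (b8_x', b8_z, [:: ONg; (OMt b8_z)]);
  (b8_x', b8_z', [:: ONg]);
  (b8_x', b8_y', [:: ONg; (OJn b8_x); (OMt b8_z)]);
  (b8_x', b8_1, [:: OSw; ONg; (OJn b8_y); (OMt b8_z); (OJn b8_x)]);
  (b8_1, b8_0, [:: OSw; (OJn b8_x); (OMt b8_z)]);
  (b8_1, b8_x, [:: OSw; (OMt b8_z)]);
  (b8_1, b8_y, [:: OSw; (OMt b8_z); (OJn b8_x)]);
  (b8_1, b8_z, [:: ONg; (OJn b8_x); (OMt b8_z)]);
  (b8_1, b8_z', [:: ONg; (OJn b8_x)]);
  (b8_1, b8_y', [:: ONg; (OJn b8_x); (OMt b8_z)]);
  (b8_1, b8_x', [:: ONg; (OJn b8_y); (OMt b8_z); (OJn b8_x)])].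

Definition mt_B10 (u v : E10) : E10 :=
  match u, v with
  | b10_0, b10_0 => b10_0
  | b10_0, b10_x => b10_0
  | b10_0, b10_y' => b10_0
  | b10_0, b10_m => b10_0
  | b10_0, b10_a => b10_0
  | b10_0, b10_a' => b10_0
  | b10_0, b10_x' => b10_0
  | b10_0, b10_y => b10_0
  | b10_0, b10_m' => b10_0
  | b10_0, b10_1 => b10_0
  | b10_x, b10_0 => b10_0
  | b10_x, b10_x => b10_x
  | b10_x, b10_y' => b10_0
  | b10_x, b10_m => b10_0
  | b10_x, b10_a => b10_x
  | b10_x, b10_a' => b10_0
  | b10_x, b10_x' => b10_0
  | b10_x, b10_y => b10_x
  | b10_x, b10_m' => b10_x
  | b10_x, b10_1 => b10_x
  | b10_y', b10_0 => b10_0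
  | b10_y', b10_x => b10_0
  | b10_y', b10_y' => b10_y'
  | b10_y', b10_m => b10_0
  | b10_y', b10_a => b10_0
  | b10_y', b10_a' => b10_y'
  | b10_y', b10_x' => b10_y'
  | b10_y', b10_y => b10_0
  | b10_y', b10_m' => b10_y'
  | b10_y', b10_1 => b10_y'
  | b10_m, b10_0 => b10_0
  | b10_m, b10_x => b10_0
  | b10_m, b10_y' => b10_0
  | b10_m, b10_m => b10_m
  | b10_m, b10_a => b10_m
  | b10_m, b10_a' => b10_m
  | b10_m, b10_x' => b10_m
  | b10_m, b10_y => b10_m
  | b10_m, b10_m' => b10_m
  | b10_m, b10_1 => b10_m
  | b10_a, b10_0 => b10_0
  | b10_a, b10_x => b10_x
  | b10_a, b10_y' => b10_0
  | b10_a, b10_m => b10_m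
  | b10_a, b10_a => b10_a
  | b10_a, b10_a' => b10_m
  | b10_a, b10_x' => b10_m
  | b10_a, b10_y => b10_a
  | b10_a, b10_m' => b10_a
  | b10_a, b10_1 => b10_a
  | b10_a', b10_0 => b10_0
  | b10_a', b10_x => b10_0
  | b10_a', b10_y' => b10_y'
  | b10_a', b10_m => b10_m
  | b10_a', b10_a => b10_m
  | b10_a', b10_a' => b10_a'
  | b10_a', b10_x' => b10_a'
  | b10_a', b10_y => b10_m
  | b10_a', b10_m' => b10_a'
  | b10_a', b10_1 => b10_a'
  | b10_x', b10_0 => b10_0
  | b10_x', b10_x => b10_0
  | b10_x', b10_y' => b10_y'
  | b10_x', b10_m => b10_m
  | b10_x', b10_a => b10_m
  | b10_x', b10_a' => b10_a'
  | b10_x', b10_x' => b10_x'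
  | b10_x', b10_y => b10_m
  | b10_x', b10_m' => b10_a'
  | b10_x', b10_1 => b10_x'
  | b10_y, b10_0 => b10_0
  | b10_y, b10_x => b10_x
  | b10_y, b10_y' => b10_0
  | b10_y, b10_m => b10_m
  | b10_y, b10_a => b10_a
  | b10_y, b10_a' => b10_m
  | b10_y, b10_x' => b10_m
  | b10_y, b10_y => b10_y
  | b10_y, b10_m' => b10_a
  | b10_y, b10_1 => b10_y
  | b10_m', b10_0 => b10_0
  | b10_m', b10_x => b10_x
  | b10_m', b10_y' => b10_y'
  | b10_m', b10_m => b10_m
  | b10_m', b10_a => b10_a
  | b10_m', b10_a' => b10_a'
  | b10_m', b10_x' => b10_a'
  | b10_m', b10_y => b10_a
  | b10_m', b10_m' => b10_m'
  | b10_m', b10_1 => b10_m'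
  | b10_1, b10_0 => b10_0
  | b10_1, b10_x => b10_x
  | b10_1, b10_y' => b10_y'
  | b10_1, b10_m => b10_m
  | b10_1, b10_a => b10_a
  | b10_1, b10_a' => b10_a'
  | b10_1, b10_x' => b10_x'
  | b10_1, b10_y => b10_y
  | b10_1, b10_m' => b10_m'
  | b10_1, b10_1 => b10_1
  end.
Definition jn_B10 (u v : E10) : E10 :=
  match u, v with
  | b10_0, b10_0 => b10_0
  | b10_0, b10_x => b10_x
  | b10_0, b10_y' => b10_y'
  | b10_0, b10_m => b10_m
  | b10_0, b10_a => b10_a
  | b10_0, b10_a' => b10_a'
  | b10_0, b10_x' => b10_x'
  | b10_0, b10_y => b10_y
  | b10_0, b10_m' => b10_m'
  | b10_0, b10_1 => b10_1
  | b10_x, b10_0 => b10_x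
  | b10_x, b10_x => b10_x
  | b10_x, b10_y' => b10_m'
  | b10_x, b10_m => b10_a
  | b10_x, b10_a => b10_a
  | b10_x, b10_a' => b10_m'
  | b10_x, b10_x' => b10_1
  | b10_x, b10_y => b10_y
  | b10_x, b10_m' => b10_m'
  | b10_x, b10_1 => b10_1
  | b10_y', b10_0 => b10_y'
  | b10_y', b10_x => b10_m'
  | b10_y', b10_y' => b10_y'
  | b10_y', b10_m => b10_a'
  | b10_y', b10_a => b10_m'
  | b10_y', b10_a' => b10_a'
  | b10_y', b10_x' => b10_x'
  | b10_y', b10_y => b10_1
  | b10_y', b10_m' => b10_m'
  | b10_y', b10_1 => b10_1
  | b10_m, b10_0 => b10_m
  | b10_m, b10_x => b10_a
  | b10_m, b10_y' => b10_a'
  | b10_m, b10_m => b10_m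
  | b10_m, b10_a => b10_a
  | b10_m, b10_a' => b10_a'
  | b10_m, b10_x' => b10_x'
  | b10_m, b10_y => b10_y
  | b10_m, b10_m' => b10_m'
  | b10_m, b10_1 => b10_1
  | b10_a, b10_0 => b10_a
  | b10_a, b10_x => b10_a
  | b10_a, b10_y' => b10_m'
  | b10_a, b10_m => b10_a
  | b10_a, b10_a => b10_a
  | b10_a, b10_a' => b10_m'
  | b10_a, b10_x' => b10_1
  | b10_a, b10_y => b10_y
  | b10_a, b10_m' => b10_m'
  | b10_a, b10_1 => b10_1
  | b10_a', b10_0 => b10_a'
  | b10_a', b10_x => b10_m'
  | b10_a', b10_y' => b10_a'
  | b10_a', b10_m => b10_a'
  | b10_a', b10_a => b10_m'
  | b10_a', b10_a' => b10_a'
  | b10_a', b10_x' => b10_x'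
  | b10_a', b10_y => b10_1
  | b10_a', b10_m' => b10_m'
  | b10_a', b10_1 => b10_1
  | b10_x', b10_0 => b10_x'
  | b10_x', b10_x => b10_1
  | b10_x', b10_y' => b10_x'
  | b10_x', b10_m => b10_x'
  | b10_x', b10_a => b10_1
  | b10_x', b10_a' => b10_x'
  | b10_x', b10_x' => b10_x'
  | b10_x', b10_y => b10_1
  | b10_x', b10_m' => b10_1
  | b10_x', b10_1 => b10_1
  | b10_y, b10_0 => b10_y
  | b10_y, b10_x => b10_y
  | b10_y, b10_y' => b10_1
  | b10_y, b10_m => b10_y
  | b10_y, b10_a => b10_y
  | b10_y, b10_a' => b10_1
  | b10_y, b10_x' => b10_1
  | b10_y, b10_y => b10_y
  | b10_y, b10_m' => b10_1
  | b10_y, b10_1 => b10_1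
  | b10_m', b10_0 => b10_m'
  | b10_m', b10_x => b10_m'
  | b10_m', b10_y' => b10_m'
  | b10_m', b10_m => b10_m'
  | b10_m', b10_a => b10_m'
  | b10_m', b10_a' => b10_m'
  | b10_m', b10_x' => b10_1
  | b10_m', b10_y => b10_1
  | b10_m', b10_m' => b10_m'
  | b10_m', b10_1 => b10_1
  | b10_1, b10_0 => b10_1
  | b10_1, b10_x => b10_1
  | b10_1, b10_y' => b10_1
  | b10_1, b10_m => b10_1
  | b10_1, b10_a => b10_1
  | b10_1, b10_a' => b10_1
  | b10_1, b10_x' => b10_1
  | b10_1, b10_y => b10_1
  | b10_1, b10_m' => b10_1
  | b10_1, b10_1 => b10_1
  end.
Definition cert_B10 : seq (E10 * E10 * seq (op E10)) := [::
  (b10_0, b10_x, [:: (OJn b10_y'); (OMt b10_m)]);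
  (b10_0, b10_y', [:: (OJn b10_x); (OMt b10_m)]);
  (b10_0, b10_m, [:: ]);
  (b10_0, b10_a, [:: (OMt b10_m)]);
  (b10_0, b10_a', [:: (OMt b10_m)]);
  (b10_0, b10_x', [:: (OMt b10_m)]);
  (b10_0, b10_y, [:: (OMt b10_m)]);
  (b10_0, b10_m', [:: (OMt b10_m)]);
  (b10_0, b10_1, [:: (OMt b10_m)]);
  (b10_x, b10_0, [:: OSw; (OJn b10_y'); (OMt b10_m)]);
  (b10_x, b10_y', [:: (OJn b10_x); (OMt b10_m)]);
  (b10_x, b10_m, [:: (OMt b10_m)]);
  (b10_x, b10_a, [:: (OMt b10_m)]);
  (b10_x, b10_a', [:: (OMt b10_m)]);
  (b10_x, b10_x', [:: (OMt b10_m)]);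
  (b10_x, b10_y, [:: (OMt b10_m)]);
  (b10_x, b10_m', [:: (OMt b10_m)]);
  (b10_x, b10_1, [:: (OMt b10_m)]);
  (b10_y', b10_0, [:: OSw; (OJn b10_x); (OMt b10_m)]);
  (b10_y', b10_x, [:: (OJn b10_y'); (OMt b10_m)]);
  (b10_y', b10_m, [:: (OMt b10_m)]);
  (b10_y', b10_a, [:: (OMt b10_m)]);
  (b10_y', b10_a', [:: (OMt b10_m)]);
  (b10_y', b10_x', [:: (OMt b10_m)]);
  (b10_y', b10_y, [:: (OMt b10_m)]);
  (b10_y', b10_m', [:: (OMt b10_m)]);
  (b10_y', b10_1, [:: (OMt b10_m)]);
  (b10_m, b10_0, [:: OSw]);
  (b10_m, b10_x, [:: OSw; (OMt b10_m)]);
  (b10_m, b10_y', [:: OSw; (OMt b10_m)]);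
  (b10_m, b10_a, [:: (OMt b10_x); (OJn b10_y'); (OMt b10_m)]);
  (b10_m, b10_a', [:: (OMt b10_y'); (OJn b10_x); (OMt b10_m)]);
  (b10_m, b10_x', [:: OSw; ONg; (OMt b10_m)]);
  (b10_m, b10_y, [:: OSw; ONg; (OMt b10_m)]);
  (b10_m, b10_m', [:: (OMt b10_x); (OJn b10_y'); (OMt b10_m)]);
  (b10_m, b10_1, [:: OSw; ONg; (OMt b10_m)]);
  (b10_a, b10_0, [:: OSw; (OMt b10_m)]);
  (b10_a, b10_x, [:: OSw; (OMt b10_m)]);
  (b10_a, b10_y', [:: OSw; (OMt b10_m)]);
  (b10_a, b10_m, [:: OSw; (OMt b10_x); (OJn b10_y'); (OMt b10_m)]);
  (b10_a, b10_a', [:: (OMt b10_y'); (OJn b10_x); (OMt b10_m)]);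
  (b10_a, b10_x', [:: OSw; ONg; (OMt b10_m)]);
  (b10_a, b10_y, [:: OSw; ONg; (OMt b10_m)]);
  (b10_a, b10_m', [:: (OMt b10_y'); (OJn b10_x); (OMt b10_m)]);
  (b10_a, b10_1, [:: OSw; ONg; (OMt b10_m)]);
  (b10_a', b10_0, [:: OSw; (OMt b10_m)]);
  (b10_a', b10_x, [:: OSw; (OMt b10_m)]);
  (b10_a', b10_y', [:: OSw; (OMt b10_m)]);
  (b10_a', b10_m, [:: OSw; (OMt b10_y'); (OJn b10_x); (OMt b10_m)]);
  (b10_a', b10_a, [:: (OMt b10_x); (OJn b10_y'); (OMt b10_m)]);
  (b10_a', b10_x', [:: OSw; ONg; (OMt b10_m)]);
  (b10_a', b10_y, [:: OSw; ONg; (OMt b10_m)]);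
  (b10_a', b10_m', [:: (OMt b10_x); (OJn b10_y'); (OMt b10_m)]);
  (b10_a', b10_1, [:: OSw; ONg; (OMt b10_m)]);
  (b10_x', b10_0, [:: OSw; (OMt b10_m)]);
  (b10_x', b10_x, [:: OSw; (OMt b10_m)]);
  (b10_x', b10_y', [:: OSw; (OMt b10_m)]);
  (b10_x', b10_m, [:: ONg; (OMt b10_m)]);
  (b10_x', b10_a, [:: ONg; (OMt b10_m)]);
  (b10_x', b10_a', [:: ONg; (OMt b10_m)]);
  (b10_x', b10_y, [:: ONg; (OJn b10_x); (OMt b10_m)]);
  (b10_x', b10_m', [:: ONg; (OMt b10_m)]);
  (b10_x', b10_1, [:: (OMt b10_x); (OJn b10_y'); (OMt b10_m)]);
  (b10_y, b10_0, [:: OSw; (OMt b10_m)]);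
  (b10_y, b10_x, [:: OSw; (OMt b10_m)]);
  (b10_y, b10_y', [:: OSw; (OMt b10_m)]);
  (b10_y, b10_m, [:: ONg; (OMt b10_m)]);
  (b10_y, b10_a, [:: ONg; (OMt b10_m)]);
  (b10_y, b10_a', [:: ONg; (OMt b10_m)]);
  (b10_y, b10_x', [:: ONg; (OJn b10_y'); (OMt b10_m)]);
  (b10_y, b10_m', [:: ONg; (OMt b10_m)]);
  (b10_y, b10_1, [:: (OMt b10_y'); (OJn b10_x); (OMt b10_m)]);
  (b10_m', b10_0, [:: OSw; (OMt b10_m)]);
  (b10_m', b10_x, [:: OSw; (OMt b10_m)]);
  (b10_m', b10_y', [:: OSw; (OMt b10_m)]);
  (b10_m', b10_m, [:: OSw; (OMt b10_x); (OJn b10_y'); (OMt b10_m)]);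
  (b10_m', b10_a, [:: OSw; (OMt b10_y'); (OJn b10_x); (OMt b10_m)]);
  (b10_m', b10_a', [:: OSw; (OMt b10_x); (OJn b10_y'); (OMt b10_m)]);
  (b10_m', b10_x', [:: OSw; ONg; (OMt b10_m)]);
  (b10_m', b10_y, [:: OSw; ONg; (OMt b10_m)]);
  (b10_m', b10_1, [:: OSw; ONg]);
  (b10_1, b10_0, [:: OSw; (OMt b10_m)]);
  (b10_1, b10_x, [:: OSw; (OMt b10_m)]);
  (b10_1, b10_y', [:: OSw; (OMt b10_m)]);
  (b10_1, b10_m, [:: ONg; (OMt b10_m)]);
  (b10_1, b10_a, [:: ONg; (OMt b10_m)]);
  (b10_1, b10_a', [:: ONg; (OMt b10_m)]);
  (b10_1, b10_x', [:: ONg; (OJn b10_y'); (OMt b10_m)]);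
  (b10_1, b10_y, [:: ONg; (OJn b10_x); (OMt b10_m)]);
  (b10_1, b10_m', [:: ONg])].
Section PklCheck.
Variables (B : Alg) (en : seq B) (beq : B -> B -> bool).
Hypothesis Hen : forall b, List.In b en.
Hypothesis beqP : forall b c, beq b c = true <-> b = c.
Variables (mtt jnt : B -> B -> B).

Definition fall1 (P : B -> bool) := List.forallb P en.
Definition fall2 (P : B -> B -> bool) := fall1 (fun x => fall1 (P x)).
Definition fall3 (P : B -> B -> B -> bool) := fall1 (fun x => fall2 (P x)).

Lemma fall1P P : fall1 P = true -> forall x, P x = true.
Proof. move=> H x. exact: (proj1 (List.forallb_forall _ _) H x (Hen x)). Qed.
Lemma fall2P P : fall2 P = true -> forall x y, P x y = true.
Proof. move=> H x. apply: fall1P. exact: (fall1P H x). Qed.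
Lemma fall3P P : fall3 P = true -> forall x y z, P x y z = true.
Proof. move=> H x. apply: fall2P. exact: (fall1P H x). Qed.

Lemma tab_ok : fall2 (fun b c => beq (mt b c) (mtt b c)) = true ->
               fall2 (fun b c => beq (jn b c) (jnt b c)) = true ->
  (forall b c, mt b c = mtt b c) /\ (forall b c, jn b c = jnt b c).
Proof.
move=> H1 H2; split => b c; apply/beqP; [exact: (fall2P H1) | exact: (fall2P H2)].
Qed.

Definition pkl_chk : bool :=
  [&& fall2 (fun x y => beq (mtt x y) (mtt y x)),
      fall2 (fun x y => beq (jnt x y) (jnt y x)),
      fall3 (fun x y z => beq (mtt x (mtt y z)) (mtt (mtt x y) z)),
      fall3 (fun x y z => beq (jnt x (jnt y z)) (jnt (jnt x y) z)),
      fall2 (fun x y => beq (mtt x (jnt x y)) x),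
      fall2 (fun x y => beq (jnt x (mtt x y)) x),
      fall1 (fun x => beq (mtt x (on B)) x),
      fall1 (fun x => beq (jnt x (zr B)) x),
      fall1 (fun x => beq (ng (ng x)) x),
      fall2 (fun x y => if beq (mtt x y) x then beq (mtt (ng y) (ng x)) (ng y) else true) &
      fall2 (fun x y => beq (mtt (mtt x (ng x)) (jnt y (ng y))) (mtt x (ng x)))].

Lemma pkl_ok : (forall b c, mt b c = mtt b c) -> (forall b c, jn b c = jnt b c) ->
  pkl_chk = true -> is_PKL B.
Proof.
move=> Hm Hj /andP[c1 /andP[c2 /andP[c3 /andP[c4 /andP[c5 /andP[c6 /andP[c7 /andP[c8 /andP[c9 /andP[c10 c11]]]]]]]]]].
rewrite /is_PKL /ale.
split; [move=> x y; rewrite !Hm; apply/beqP; exact: (fall2P c1 x y)|].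
split; [move=> x y; rewrite !Hj; apply/beqP; exact: (fall2P c2 x y)|].
split; [move=> x y z; rewrite !Hm; apply/beqP; exact: (fall3P c3 x y z)|].
split; [move=> x y z; rewrite !Hj; apply/beqP; exact: (fall3P c4 x y z)|].
split; [move=> x y; rewrite Hm Hj; apply/beqP; exact: (fall2P c5 x y)|].
split; [move=> x y; rewrite Hm Hj; apply/beqP; exact: (fall2P c6 x y)|].
split; [move=> x; rewrite Hm; apply/beqP; exact: (fall1P c7 x)|].
split; [move=> x; rewrite Hj; apply/beqP; exact: (fall1P c8 x)|].
split; [move=> x; apply/beqP; exact: (fall1P c9 x)|].
split.
- move=> x y; rewrite !Hm => Hxy. apply/beqP. have := fall2P c10 x y.
  by rewrite (proj2 (beqP _ _) Hxy).
- move=> x y; rewrite !Hm !Hj. apply/beqP. exact: (fall2P c11 x y).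
Qed.
End PklCheck.

Lemma tab6 : (forall b c : B6, mt b c = mt_B6 b c) /\ (forall b c : B6, jn b c = jn_B6 b c).
Proof. exact: (@tab_ok B6 en6 beq6 Hen6 beq6P mt_B6 jn_B6 ltac:(vm_compute; reflexivity) ltac:(vm_compute; reflexivity)). Qed.
Lemma tab8 : (forall b c : B8s, mt b c = mt_B8 b c) /\ (forall b c : B8s, jn b c = jn_B8 b c).
Proof. exact: (@tab_ok B8s en8 beq8 Hen8 beq8P mt_B8 jn_B8 ltac:(vm_compute; reflexivity) ltac:(vm_compute; reflexivity)). Qed.
Lemma tab10 : (forall b c : B10, mt b c = mt_B10 b c) /\ (forall b c : B10, jn b c = jn_B10 b c).
Proof. exact: (@tab_ok B10 en10 beq10 Hen10 beq10P mt_B10 jn_B10 ltac:(vm_compute; reflexivity) ltac:(vm_compute; reflexivity)). Qed.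

Lemma pkl6 : is_PKL B6.
Proof. apply: (@pkl_ok B6 en6 beq6 Hen6 beq6P mt_B6 jn_B6 (proj1 tab6) (proj2 tab6)). vm_compute. reflexivity. Qed.
Lemma pkl8 : is_PKL B8s.
Proof. apply: (@pkl_ok B8s en8 beq8 Hen8 beq8P mt_B8 jn_B8 (proj1 tab8) (proj2 tab8)). vm_compute. reflexivity. Qed.
Lemma pkl10 : is_PKL B10.
Proof. apply: (@pkl_ok B10 en10 beq10 Hen10 beq10P mt_B10 jn_B10 (proj1 tab10) (proj2 tab10)). vm_compute. reflexivity. Qed.

Definition tx := TV 0. Definition ty := TV 1.
Definition tX := TNV 0. Definition tY := TNV 1.
Definition tp := TM tx tX. Definition tq := TM ty tY.
Definition ta := TJ tx tq. Definition tb := TM ty (TJ tx tX).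
Definition tz := TM tX ty. Definition tmm := TM tz (tneg tz).
Definition tk := TJ tp tq.

Definition withneg (hs : seq (tm * tm)) := hs ++ map (fun h => (tneg h.2, tneg h.1)) hs.

Definition rho2 (A : Alg) (x y : A) (i : nat) : A := if i is 0 then x else y.

Section Gen.
Variables (A : Alg) (HA : is_PKL A) (x y : A).
Local Notation rho := (rho2 x y).

Lemma withneg_ok hs : (forall h, List.In h hs -> ale (ev rho h.1) (ev rho h.2)) ->
  forall h, List.In h (withneg hs) -> ale (ev rho h.1) (ev rho h.2).
Proof.
move=> H h Hin; case: (List.in_app_or _ _ _ Hin) => [/H //|].
case/List.in_map_iff => h' [<- Hh'] /=.
rewrite !(ev_neg HA). apply: (nanti HA). exact: H.
Qed.

Variables (B : Alg) (HB : is_PKL B) (en : seq B) (beq : B -> B -> bool).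
Hypothesis Hen : forall b, List.In b en.
Hypothesis beqP : forall b c, beq b c = true <-> b = c.
Variables (mtt jnt : B -> B -> B).
Hypothesis Hm : forall b c, mt b c = mtt b c.
Hypothesis Hj : forall b c, jn b c = jnt b c.
Variables (lamT : B -> tm) (hs : seq (tm * tm)).
Hypothesis Hhs : forall h, List.In h hs -> ale (ev rho h.1) (ev rho h.2).
Hypothesis CM : fall2 en (fun b c => chk hs 2 60 (lamT (mtt b c)) (lamT b)) = true.
Hypothesis CJ : fall2 en (fun b c => chk hs 2 60 (lamT (jnt b c)) (TJ (lamT b) (lamT c))) = true.
Hypothesis CH : fall1 en (fun b => chk hs 2 60 (lamT b) (tneg (lamT (ng b)))) = true.
Hypothesis CZ : lamT (zr B) = T0.
Variables (b0 c0 : B).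
Hypothesis key : ~ ale (ev rho (lamT c0)) (ng (ev rho (lamT (ng b0)))).
Variable cert : seq (B * B * seq (op B)).
Hypothesis Hcert : cert_ok mtt jnt en beq b0 c0 cert = true.

Lemma case_gen e : satisfies A e -> satisfies B e.
Proof.
apply: (@transfer A B HA HB (fun b => ev rho (lamT b)) _ _ _ _
          mtt jnt Hm Hj en beq Hen beqP b0 c0 key cert Hcert).
- move=> b c; rewrite Hm. apply: (chk_sound HA Hhs). exact: (fall2P Hen CM b c).
- move=> b c; rewrite Hj. have := chk_sound HA Hhs (fall2P Hen CJ b c). by [].
- move=> b. rewrite -(ev_neg HA). apply: (chk_sound HA Hhs). exact: (fall1P Hen CH b).
- rewrite CZ. exact: (le_refl HA).
Qed.
End Gen.

Definition lam6 (b : E6) : tm :=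
  match b with
  | b6_0 => T0 | b6_x => ta | b6_y => tb | b6_y' => tneg tb | b6_x' => tneg ta
  | b6_1 => TJ tb (tneg ta) end.
Definition lam8q (b : E8) : tm :=
  match b with
  | b8_0 => T0 | b8_x => tq | b8_y => tx | b8_z => TM tmm ta
  | b8_z' => TJ tx (TM tmm ta) | b8_y' => tX | b8_x' => tneg tk
  | b8_1 => TJ tX (tneg tk) end.
Definition lam8p (b : E8) : tm :=
  match b with
  | b8_0 => T0 | b8_x => tp | b8_y => tY | b8_z => TM tmm (tneg tb)
  | b8_z' => TJ tY (TM tmm (tneg tb)) | b8_y' => ty | b8_x' => tneg tk
  | b8_1 => TJ ty (tneg tk) end.
Definition lam10 (b : E10) : tm :=
  match b with
  | b10_0 => T0 | b10_x => ta | b10_y' => tneg tb | b10_m => tmm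
  | b10_a => TJ ta tmm | b10_a' => TJ (tneg tb) tmm | b10_x' => tneg ta
  | b10_y => tb | b10_m' => TJ (TJ ta (tneg tb)) tmm | b10_1 => TJ (tneg ta) tb end.

Definition hs6 := withneg [:: (tx, ty); (tz, tk)].
Definition hs8 := withneg [:: (tx, ty)].
Definition hs10 := withneg [:: (tx, ty); (TM tmm ta, tk); (TM tmm (tneg tb), tk)].

Lemma c6M : fall2 (B:=B6) en6 (fun b c => chk hs6 2 60 (lam6 (mt_B6 b c)) (lam6 b)) = true.
Proof. vm_compute. reflexivity. Qed.
Lemma c6J : fall2 (B:=B6) en6 (fun b c => chk hs6 2 60 (lam6 (jn_B6 b c)) (TJ (lam6 b) (lam6 c))) = true.
Proof. vm_compute. reflexivity. Qed.
Lemma c6H : fall1 (B:=B6) en6 (fun b => chk hs6 2 60 (lam6 b) (tneg (lam6 (ng b)))) = true.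
Proof. vm_compute. reflexivity. Qed.
Lemma c6C : cert_ok (B:=B6) mt_B6 jn_B6 en6 beq6 b6_x b6_y cert_B6 = true.
Proof. vm_compute. reflexivity. Qed.
Lemma c8qM : fall2 (B:=B8s) en8 (fun b c => chk hs8 2 60 (lam8q (mt_B8 b c)) (lam8q b)) = true.
Proof. vm_compute. reflexivity. Qed.
Lemma c8qJ : fall2 (B:=B8s) en8 (fun b c => chk hs8 2 60 (lam8q (jn_B8 b c)) (TJ (lam8q b) (lam8q c))) = true.
Proof. vm_compute. reflexivity. Qed.
Lemma c8qH : fall1 (B:=B8s) en8 (fun b => chk hs8 2 60 (lam8q b) (tneg (lam8q (ng b)))) = true.
Proof. vm_compute. reflexivity. Qed.
Lemma c8pM : fall2 (B:=B8s) en8 (fun b c => chk hs8 2 60 (lam8p (mt_B8 b c)) (lam8p b)) = true.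
Proof. vm_compute. reflexivity. Qed.
Lemma c8pJ : fall2 (B:=B8s) en8 (fun b c => chk hs8 2 60 (lam8p (jn_B8 b c)) (TJ (lam8p b) (lam8p c))) = true.
Proof. vm_compute. reflexivity. Qed.
Lemma c8pH : fall1 (B:=B8s) en8 (fun b => chk hs8 2 60 (lam8p b) (tneg (lam8p (ng b)))) = true.
Proof. vm_compute. reflexivity. Qed.
Lemma c8C : cert_ok (B:=B8s) mt_B8 jn_B8 en8 beq8 b8_x b8_z cert_B8 = true.
Proof. vm_compute. reflexivity. Qed.
Lemma c10M : fall2 (B:=B10) en10 (fun b c => chk hs10 2 60 (lam10 (mt_B10 b c)) (lam10 b)) = true.
Proof. vm_compute. reflexivity. Qed.
Lemma c10J : fall2 (B:=B10) en10 (fun b c => chk hs10 2 60 (lam10 (jn_B10 b c)) (TJ (lam10 b) (lam10 c))) = true.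
Proof. vm_compute. reflexivity. Qed.
Lemma c10H : fall1 (B:=B10) en10 (fun b => chk hs10 2 60 (lam10 b) (tneg (lam10 (ng b)))) = true.
Proof. vm_compute. reflexivity. Qed.
Lemma c10C : cert_ok (B:=B10) mt_B10 jn_B10 en10 beq10 b10_0 b10_m cert_B10 = true.
Proof. vm_compute. reflexivity. Qed.

Section Cases.
Variables (A : Alg) (HA : is_PKL A) (x y : A).
Hypothesis Hxy : ale x y.
Local Notation rho := (rho2 x y).

Lemma hsbase : forall h, List.In h [:: (tx, ty)] -> ale (ev rho h.1) (ev rho h.2).
Proof. by move=> h [<-|[]]. Qed.

Lemma caseB6 (Hsp : mt (ng x) y = jn (mt x (ng x)) (mt y (ng y)))
  (Hne : mt y (jn x (ng x)) <> jn x (mt y (ng y))) e :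
  satisfies A e -> satisfies B6 e.
Proof.
have Hhs : forall h, List.In h hs6 -> ale (ev rho h.1) (ev rho h.2).
  apply: (withneg_ok HA) => h [<-|[<-|[]]] /=; first by [].
  rewrite Hsp. exact: (le_refl HA).
apply: (@case_gen A HA x y B6 pkl6 en6 beq6 Hen6 beq6P mt_B6 jn_B6 (proj1 tab6) (proj2 tab6)
   lam6 hs6 Hhs c6M c6J c6H erefl b6_x b6_y _ cert_B6 c6C).
change (~ ale (ev rho tb) (ng (ev rho (tneg ta)))). rewrite (ev_neg HA) (nK HA) => H. apply: Hne. apply: (le_anti HA) => //.
  exact: (chk_sound HA Hhs (f := 60) (d := 2) (s := ta) (t := tb) ltac:(vm_compute; reflexivity)).
Qed.

Lemma hs8_ok : forall h, List.In h hs8 -> ale (ev rho h.1) (ev rho h.2).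
Proof. apply: (withneg_ok HA) => h [<-|[]] //. Qed.

Lemma caseB8q (Hn : ~ ale (ev rho (TM tmm ta)) (ev rho tk)) e :
  satisfies A e -> satisfies B8s e.
Proof.
apply: (@case_gen A HA x y B8s pkl8 en8 beq8 Hen8 beq8P mt_B8 jn_B8 (proj1 tab8) (proj2 tab8)
   lam8q hs8 hs8_ok c8qM c8qJ c8qH erefl b8_x b8_z _ cert_B8 c8C).
change (~ ale (ev rho (TM tmm ta)) (ng (ev rho (tneg tk)))).
by rewrite (ev_neg HA) (nK HA).
Qed.

Lemma caseB8p (Hn : ~ ale (ev rho (TM tmm (tneg tb))) (ev rho tk)) e :
  satisfies A e -> satisfies B8s e.
Proof.
apply: (@case_gen A HA x y B8s pkl8 en8 beq8 Hen8 beq8P mt_B8 jn_B8 (proj1 tab8) (proj2 tab8)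
   lam8p hs8 hs8_ok c8pM c8pJ c8pH erefl b8_x b8_z _ cert_B8 c8C).
change (~ ale (ev rho (TM tmm (tneg tb))) (ng (ev rho (tneg tk)))).
by rewrite (ev_neg HA) (nK HA).
Qed.

Lemma caseB10 (H1 : ale (ev rho (TM tmm ta)) (ev rho tk))
  (H2 : ale (ev rho (TM tmm (tneg tb))) (ev rho tk))
  (Hn : ~ ale (ev rho tmm) (ev rho tk)) e :
  satisfies A e -> satisfies B10 e.
Proof.
have Hhs : forall h, List.In h hs10 -> ale (ev rho h.1) (ev rho h.2).
  by apply: (withneg_ok HA) => h [<-|[<-|[<-|[]]]].
apply: (@case_gen A HA x y B10 pkl10 en10 beq10 Hen10 beq10P mt_B10 jn_B10 (proj1 tab10) (proj2 tab10)
   lam10 hs10 Hhs c10M c10J c10H erefl b10_0 b10_m _ cert_B10 c10C).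
change (~ ale (ev rho tmm) (ng (ev rho (TJ (tneg ta) tb)))).
rewrite -(ev_neg HA) => H. apply: Hn.
have Hhs' : forall h, List.In h ((tmm, tneg (TJ (tneg ta) tb)) :: hs10) -> ale (ev rho h.1) (ev rho h.2).
  move=> h [<-|/Hhs //]. exact: H.
exact: (chk_sound HA Hhs' (f := 60) (d := 2) (s := tmm) (t := tk) ltac:(vm_compute; reflexivity)).
Qed.
End Cases.

Lemma nsp6 : ~ is_SPOML B6.
Proof.
case=> H _. move: (H b6_x b6_y ltac:(vm_compute; reflexivity) ltac:(vm_compute; reflexivity)).
move/(f_equal code6). vm_compute. discriminate.
Qed.
Lemma nsp8 : ~ is_SPOML B8s.
Proof.
case=> _ H. move: (H b8_x b8_y' ltac:(vm_compute; reflexivity)).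
move/(f_equal code8). vm_compute. discriminate.
Qed.
Lemma nsp10 : ~ is_SPOML B10.
Proof.
case=> _ H. move: (H b10_x b10_y ltac:(vm_compute; reflexivity)).
move/(f_equal code10). vm_compute. discriminate.
Qed.

Lemma spoml_iso (A B : Alg) : alg_iso A B -> is_SPOML A -> is_SPOML B.
Proof.
case=> f [g [fK [gK [fm [fj [fn [f0 f1]]]]]]] [S1 S2].
have gm : forall u v, g (mt u v) = mt (g u) (g v).
  move=> u v. by rewrite -{1}(gK u) -{1}(gK v) -fm fK.
have gj : forall u v, g (jn u v) = jn (g u) (g v).
  move=> u v. by rewrite -{1}(gK u) -{1}(gK v) -fj fK.
have gn : forall u, g (ng u) = ng (g u).
  move=> u. by rewrite -{1}(gK u) -fn fK.
have ginj : forall u v, g u = g v -> u = v.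
  move=> u v E. by rewrite -(gK u) E gK.
rewrite /ale; split.
- move=> x y Hxy Hh. apply: ginj. have := S1 (g x) (g y).
  rewrite /ale; repeat (rewrite -gn || rewrite -gm || rewrite -gj). rewrite Hxy Hh. by apply.
- move=> x y Hxy. apply: ginj. have := S2 (g x) (g y).
  rewrite /ale; repeat (rewrite -gn || rewrite -gm || rewrite -gj). rewrite Hxy. by apply.
Qed.

Lemma iso_refl (B : Alg) : alg_iso B B.
Proof. by exists id, id. Qed.

Theorem corollary4p3 (E : term * term -> Prop) :
  (forall A : Alg, in_subvariety E A -> is_SPOML A) <->
  ~ (exists A : Alg, in_subvariety E A /\
       (alg_iso A B6 \/ alg_iso A B8s \/ alg_iso A B10)).
Proof.
split.
- move=> H [A [HV [Hi|[Hi|Hi]]]].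
  + apply: nsp6. exact: (spoml_iso Hi (H A HV)).
  + apply: nsp8. exact: (spoml_iso Hi (H A HV)).
  + apply: nsp10. exact: (spoml_iso Hi (H A HV)).
- move=> Hno A [HA HE]. split.
  + move=> x y Hxy Hsp.
    case: (classic (mt y (jn x (ng x)) = jn x (mt y (ng y)))) => // Hne.
    exfalso; apply: Hno; exists B6; split; last by left; exact: iso_refl.
    split; first exact: pkl6.
    move=> e He. exact: (caseB6 HA Hxy Hsp Hne (HE e He)).
  + move=> x y Hxy.
    have Em : ev (rho2 x y) tmm = mt (mt (ng x) y) (ng (mt (ng x) y)).
      by rewrite /= (ngM HA) (nK HA).
    have Ek : ev (rho2 x y) tk = jn (mt x (ng x)) (mt y (ng y)) by [].
    rewrite -Em -Ek.
    have Hkm : ale (ev (rho2 x y) tk) (ev (rho2 x y) tmm).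
      exact: (chk_sound HA (hs8_ok HA Hxy) (f := 60) (d := 2) (s := tk) (t := tmm) ltac:(vm_compute; reflexivity)).
    case: (classic (ale (ev (rho2 x y) tmm) (ev (rho2 x y) tk))) => [Hmk|Hn].
      exact: (le_anti HA Hkm Hmk).
    exfalso; apply: Hno.
    case: (classic (ale (ev (rho2 x y) (TM tmm ta)) (ev (rho2 x y) tk))) => [H1|H1].
    * case: (classic (ale (ev (rho2 x y) (TM tmm (tneg tb))) (ev (rho2 x y) tk))) => [H2|H2].
      -- exists B10; split; last by right; right; exact: iso_refl.
         split; first exact: pkl10.
         move=> e He. exact: (caseB10 HA Hxy H1 H2 Hn (HE e He)).
      -- exists B8s; split; last by right; left; exact: iso_refl.
         split; first exact: pkl8.
         move=> e He. exact: (caseB8p HA Hxy H2 (HE e He)).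
    * exists B8s; split; last by right; left; exact: iso_refl.
      split; first exact: pkl8.
      move=> e He. exact: (caseB8q HA Hxy H1 (HE e He)).
Qed.
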